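(* In the general setting described in the context, fix $n$ and let $\{y_k:k=1,\dots,L\}\subseteq M$ with weights $\tau_k>0$ satisfy, for some $A,B>0$, $A\|p\|_2^2\le\sum_{k=1}^L|p(y_k)|^2\tau_k\le B\|p\|_2^2$ for all $p\in\mathcal P_n$. For $f\in C(M)$ let $q=\operatorname{argmin}_{p\in\mathcal P_n}\sum_{k=1}^L|f(y_k)-p(y_k)|^2\tau_k$. Then $$\|f-q\|_2\le\big(1+(B/A)^2\big)^{1/2}\|f-P_nf\|_\infty.$$
   Context: $M$ is a compact space, $\mu$ a probability measure on $M$, $\|\cdot\|_2$ the $L^2(M,\mu)$-norm. $\{\phi_k:k\in\mathbb N\}$ is an orthonormal basis of $L^2(M,\mu)$ of continuous functions with $\phi_1\equiv1$. $(\lambda_k)$ is non-decreasing, $\lambda_k\ge0$, $\lambda_k\to\infty$. $\mathcal P_n=\operatorname{span}\{\phi_k:\lambda_k\le n\}$ and $P_n$ is the orthogonal projection of $L^2(M,\mu)$ onto $\mathcal P_n$. *)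

(* Defs.v *)
From HB Require Import structures.
From mathcomp Require Import all_boot all_order all_algebra.
From mathcomp Require Import all_classical all_reals all_analysis.
Set Implicit Arguments. Unset Strict Implicit. Unset Printing Implicit Defensive.
Import Order.TTheory GRing.Theory Num.Theory numFieldNormedType.Exports.
Local Open Scope classical_set_scope.
Local Open Scope ring_scope.

Definition Borel (M : ptopologicalType) := g_sigma_algebraType (@open M).

Section Defs.
Context {R : realType} {M : ptopologicalType}.

Definition Pspace (phi : nat -> M -> R) (lambda : nat -> R) (n : R) (p : M -> R) :=
  exists (N : nat) (c : nat -> R),
    p = (fun x => \sum_(k < N | lambda k <= n) c k * phi k x).

Definition orthonormal_sys (mu : {measure set (Borel M) -> \bar R}) (phi : nat -> M -> R) :=
  forall j k : nat, (\int[mu]_x (phi j x * phi k x)%:E = ((j == k)%:R)%:E)%E.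

Definition complete_system (mu : {measure set (Borel M) -> \bar R}) (phi : nat -> M -> R) :=
  forall g : Borel M -> R, measurable_fun setT g ->
    (\int[mu]_x ((g x) ^+ 2)%:E < +oo)%E ->
    (forall k, (\int[mu]_x (g x * phi k x)%:E = 0)%E) ->
    {ae mu, forall x, g x = 0}.

Definition supnorm (g : M -> R) : R := sup (range (fun x => `|g x|)).

Definition L2norm (mu : {measure set (Borel M) -> \bar R}) (g : M -> R) : \bar R :=
  Lnorm mu 2%:E (EFin \o (g : Borel M -> R)).

End Defs.

(* Main.v *)
Require Import Defs.
From HB Require Import structures.
From mathcomp Require Import all_boot all_order all_algebra.
From mathcomp Require Import all_classical all_reals all_analysis.
From mathcomp Require Import measurable_realfun ring lra.
Import Order.TTheory GRing.Theory Num.Theory numFieldNormedType.Exports.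
Local Open Scope classical_set_scope.
Local Open Scope ring_scope.
Section D.
Context {R : realType}.
Lemma disc (G X V : R) : 0 <= V -> (forall t, G - 2*X + V <= G - 2*t*X + t^+2*V) ->
  0 <= G - 2*X + V -> V <= G.
Proof.
move=> V0 H H0.
pose e := (X - V) / (V + 1).
have he : e * (V + 1) = X - V by rewrite /e mulfVK // gt_eqF // ltr_wpDl.
have := H (1 + e) => H1.
have H2 : e ^+ 2 * (V + 2) <= 0 by nra.
have e0 : e = 0.
  apply/eqP; rewrite -sqrf_eq0 eq_le sqr_ge0 andbT.
  rewrite -(pmulr_lle0 _ (_ : 0 < V + 2)) //; lra.
nra.
Qed.

Lemma sum_expand L (u v w : 'I_L -> R) t :
  \sum_(k < L) `|u k - t * v k| ^+ 2 * w k =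
  \sum_(k < L) u k ^+ 2 * w k - 2 * t * \sum_(k < L) u k * v k * w k
  + t ^+ 2 * \sum_(k < L) v k ^+ 2 * w k.
Proof.
rewrite !mulr_sumr -sumrB -big_split /=; apply: eq_bigr => k _.
rewrite real_normK ?num_real //; ring.
Qed.
End D.
Section P.
Context {R : realType} {M : ptopologicalType}.
Variables (phi : nat -> M -> R) (lambda : nat -> R) (n : R).
Hypothesis hcont : forall k, continuous (phi k).

Lemma Pspace_cont p : Pspace phi lambda n p -> continuous p.
Proof.
move=> [N [c ->]].
apply: (@continuous_big _ _ +%R 0 _ _ _ _ (fun (k : 'I_N) x => c k * phi k x)).
  exact: add_continuous.
move=> k _ x; apply: cvgM; [exact: cvg_cst | exact: hcont].
Qed.

Lemma widen_sum N1 N (P : pred nat) (c : nat -> R) (g : nat -> R) : (N1 <= N)%N ->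
  \sum_(k < N | P k) (if (k < N1)%N then c k else 0) * g k = \sum_(k < N1 | P k) c k * g k.
Proof.
move=> le.
rewrite -(big_mkord P (fun k => (if (k < N1)%N then c k else 0) * g k)).
rewrite -(big_mkord P (fun k => c k * g k)).
rewrite (@big_cat_nat _ _ _ N1 0 N) //=.
rewrite [X in _ + X]big1_seq ?addr0; last first.
  move=> i /andP[_]; rewrite mem_index_iota => /andP[h _].
  by rewrite ltnNge h mul0r.
rewrite big_nat_cond [RHS]big_nat_cond; apply: eq_bigr => i /andP[/andP[_ ->] _] //.
Qed.

Lemma Pspace_lin a b p1 p2 : Pspace phi lambda n p1 -> Pspace phi lambda n p2 ->
  Pspace phi lambda n (fun x => a * p1 x + b * p2 x).
Proof.
move=> [N1 [c1 ->]] [N2 [c2 ->]].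
exists (maxn N1 N2), (fun k => a * (if (k < N1)%N then c1 k else 0) + b * (if (k < N2)%N then c2 k else 0)).
apply/funext => x.
rewrite -(@widen_sum N1 (maxn N1 N2) (fun k => lambda k <= n) c1 (fun k => phi k x) (leq_maxl _ _)).
rewrite -(@widen_sum N2 (maxn N1 N2) (fun k => lambda k <= n) c2 (fun k => phi k x) (leq_maxr _ _)).
rewrite !mulr_sumr -big_split /=; apply: eq_bigr => k _.
by rewrite mulrDl !mulrA.
Qed.
End P.
Section S.
Context {R : realType} {M : ptopologicalType}.
Variable mu : probability (Borel M) R.
Hypothesis hM : compact [set: M].

Lemma cont_meas (h : M -> R) : continuous h -> measurable_fun [set: Borel M] (h : Borel M -> R).
Proof.
move=> /continuousP ch; apply: (measurability _ (RGenOpens.measurableE R)).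
move=> _ [_ [a [b ->] <-]]. rewrite setTI. apply: sub_gen_smallest.
exact/ch/interval_open.
Qed.

Lemma cont_bnd (h : M -> R) : continuous h -> exists C, forall x, `|h x| <= C.
Proof.
move=> ch.
have : compact (h @` [set: M]).
  apply: continuous_compact => //. by apply: continuous_subspaceT.
move=> /compact_bounded [C [_ HC]].
exists (C + 1) => x; apply: (HC (C+1)); first by rewrite ltrDl.
by exists x.
Qed.

Lemma cont_int (h : M -> R) : continuous h -> mu.-integrable [set: Borel M] (EFin \o h).
Proof.
move=> ch; apply: measurable_bounded_integrable => //.
- by move: (probability_setT mu) => E; apply: (@le_lt_trans _ _ 1%E); [rewrite -E|rewrite ltry].
- exact: cont_meas.
have [C HC] := cont_bnd _ ch.
exists C; split; first exact: num_real.
by move=> m Cm x _ /=; apply: le_trans (HC x) (ltW Cm).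
Qed.

Lemma intE (h : M -> R) : continuous h ->
  (\int[mu]_x (h x)%:E = (\int[mu]_x h x)%:E)%E.
Proof.
by move=> ch; rewrite fineK //; apply: integrable_fin_num => //; exact: cont_int.
Qed.

Lemma int_cst (c : R) : \int[mu]_x c = c.
Proof.
rewrite Rintegral_cst //.
rewrite (_ : fine _ = 1) ?mulr1 //; exact: (f_equal fine (probability_setT mu)).
Qed.

Lemma L2norm_le (h : M -> R) c : continuous h -> 0 <= c ->
  \int[mu]_x (h x ^+ 2) <= c ^+ 2 -> (L2norm mu h <= c%:E)%E.
Proof.
move=> ch c0 hle.
rewrite /L2norm unlock /=.
under eq_integral => x _ do rewrite powR_mulrn // real_normK ?num_real //.
have ch2 : continuous (fun x => h x ^+ 2).
  by move=> x; apply: cvgM; [exact: ch | exact: ch].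
rewrite (intE _ ch2) poweR_EFin powR12_sqrt; last by apply: Rintegral_ge0 => x _; exact: sqr_ge0.
rewrite lee_fin -(ger0_norm c0) -sqrtr_sqr ler_sqrt //; exact: sqr_ge0.
Qed.
End S.
Theorem corollary3p4 (R : realType) (M : ptopologicalType)
  (mu : probability (Borel M) R)
  (phi : nat -> M -> R) (lambda : nat -> R)
  (hM : compact [set: M])
  (hcont : forall k, continuous (phi k))
  (hON : orthonormal_sys mu phi)
  (hcomplete : complete_system mu phi)
  (hphi0 : phi 0%N = cst 1)
  (hlam_mono : {homo lambda : a b / (a <= b)%N >-> a <= b})
  (hlam_ge0 : forall k, 0 <= lambda k)
  (hlam_oo : lambda @ \oo --> +oo)
  (n : R) (L : nat) (y : 'I_L -> M) (tau : 'I_L -> R) (A B : R)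
  (htau : forall k, 0 < tau k) (hA : 0 < A) (hB : 0 < B)
  (hMZ : forall p, Pspace phi lambda n p ->
     (A%:E * \int[mu]_x ((p x) ^+ 2)%:E <= (\sum_(k < L) `|p (y k)| ^+ 2 * tau k)%:E)%E /\
     ((\sum_(k < L) `|p (y k)| ^+ 2 * tau k)%:E <= B%:E * \int[mu]_x ((p x) ^+ 2)%:E)%E)
  (f : M -> R) (hf : continuous f)
  (Pnf : M -> R)
  (hPnf : Pspace phi lambda n Pnf /\
     forall p, Pspace phi lambda n p ->
       (\int[mu]_x ((f x - Pnf x) * p x)%:E = 0)%E)
  (q : M -> R)
  (hq : Pspace phi lambda n q /\
     forall p, Pspace phi lambda n p ->
       \sum_(k < L) `|f (y k) - q (y k)| ^+ 2 * tau k
         <= \sum_(k < L) `|f (y k) - p (y k)| ^+ 2 * tau k) :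
  (L2norm mu (f \- q)%R <= (Num.sqrt (1 + (B / A) ^+ 2) * supnorm (f \- Pnf)%R)%:E)%E.
Proof.
move: hPnf hq => [PP hPorth] [Pq hqmin].
have cont := @Pspace_cont _ _ phi lambda n hcont.
have lin := @Pspace_lin _ _ phi lambda n.
pose g := fun x => f x - Pnf x.
pose r := fun x => q x - Pnf x.
have Pr : Pspace phi lambda n r.
  have -> : r = (fun x => 1 * q x + (-1) * Pnf x).
    by apply/funext => x; rewrite /r; ring.
  exact: lin.
have cPnf := cont _ PP. have cq := cont _ Pq. have cr := cont _ Pr.
have cg : continuous g by move=> x; apply: cvgB; [exact: hf | exact: cPnf].
pose s := supnorm (f \- Pnf)%R.
have hs : forall x, `|g x| <= s.
  move=> x; apply: sup_upper_bound; last by exists x.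
  split; first by exists `|g x|, x.
  have [C HC] := cont_bnd hM _ cg.
  by exists C => _ [z _ <-]; exact: HC.
have s0 : 0 <= s by apply: le_trans (hs point).
pose SG := \sum_(k < L) g (y k) ^+ 2 * tau k.
pose X := \sum_(k < L) g (y k) * r (y k) * tau k.
pose V := \sum_(k < L) r (y k) ^+ 2 * tau k.
have key : forall t, \sum_(k < L) `|f (y k) - (Pnf (y k) + t * r (y k))| ^+ 2 * tau k
    = SG - 2 * t * X + t ^+ 2 * V.
  move=> t; rewrite -sum_expand; apply: eq_bigr => k _; congr (`|_| ^+ 2 * _).
  by rewrite /g; ring.
have VSG : V <= SG.
  apply: (@disc _ SG X V).
  - by apply: sumr_ge0 => k _; apply: mulr_ge0; [exact: sqr_ge0 | exact: ltW].
  - move=> t; rewrite -key.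
    have -> : SG - 2 * X + V = SG - 2 * 1 * X + 1 ^+ 2 * V by ring.
    rewrite -key.
    have -> : \sum_(k<L) `|f (y k) - (Pnf (y k) + 1 * r (y k))| ^+ 2 * tau k = \sum_(k<L) `|f (y k) - q (y k)| ^+ 2 * tau k.
      by apply: eq_bigr => k _; rewrite /r; congr (`|_| ^+ 2 * _); ring.
    apply: le_trans (hqmin _ (lin 1 t _ _ PP Pr)) _.
    by rewrite le_eqVlt; apply/orP; left; apply/eqP; apply: eq_bigr => k _; rewrite mul1r.
  - have -> : SG - 2 * X + V = SG - 2 * 1 * X + 1 ^+ 2 * V by ring.
    rewrite -key; apply: sumr_ge0 => k _; apply: mulr_ge0; [exact: sqr_ge0 | exact: ltW].
have cM : forall a b : M -> R, continuous a -> continuous b -> continuous (fun x => a x * b x).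
  by move=> a b ca cb x; apply: cvgM; [exact: ca | exact: cb].
have int := cont_int mu hM.
have cfq : continuous (fun x => f x - q x).
  by move=> x; apply: cvgB; [exact: hf | exact: cq].
have hint : \int[mu]_x ((f x - q x) ^+ 2) =
    \int[mu]_x (g x ^+ 2) - 2 * \int[mu]_x (g x * r x) + \int[mu]_x (r x ^+ 2).
  rewrite (@eq_Rintegral _ _ _ mu _ (fun x => (g x ^+ 2 - 2 * (g x * r x)) + r x ^+ 2)); last first.
    by move=> x _; rewrite /g /r; ring.
  rewrite RintegralD //; [|apply: int; move=> x; apply: cvgB; [exact: cM | apply: cvgM; [exact: cvg_cst| exact: cM]] | exact: int (cM _ _ cr cr)].
  rewrite RintegralB //; [|exact: int (cM _ _ cg cg) | apply: int; move=> x; apply: cvgM; [exact: cvg_cst| exact: cM]].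
  by rewrite RintegralZl //; exact: int (cM _ _ cg cr).
have gr0 : \int[mu]_x (g x * r x) = 0.
  have := hPorth _ Pr; rewrite (intE mu hM (fun x => g x * r x)) //; last exact: cM.
  by move=> [].
have gint : \int[mu]_x (g x ^+ 2) <= s ^+ 2.
  rewrite -[X in _ <= X](int_cst mu).
  apply: le_Rintegral => //; [exact: int (cM _ _ cg cg) | apply: int; exact: cst_continuous|].
  move=> x _; have := hs x; have := normr_ge0 (g x).
  rewrite -[g x ^+ 2]real_normK ?num_real // => h1 h2.
  by rewrite ler_sqr // nnegrE (le_trans h1 h2).
have rint : A * \int[mu]_x (r x ^+ 2) <= V.
  have := (hMZ _ Pr).1; rewrite (intE mu hM (fun x => r x ^+ 2)) //; last exact: cM.
  rewrite -EFinM lee_fin => H; apply: le_trans H _.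
  by rewrite le_eqVlt; apply/orP; left; apply/eqP; apply: eq_bigr => k _; rewrite real_normK ?num_real.
have SGle : SG <= s ^+ 2 * \sum_(k < L) tau k.
  rewrite mulr_sumr; apply: ler_sum => k _.
  have := hs (y k); have := normr_ge0 (g (y k)).
  rewrite -[g (y k) ^+ 2]real_normK ?num_real // ler_pM2r // => h1 h2.
  by rewrite ler_sqr // nnegrE (le_trans h1 h2).
have rbound : \int[mu]_x (r x ^+ 2) <= s ^+ 2 * (B / A) ^+ 2.
  have [hl0|hl0] := leP (lambda 0%N) n.
    pose one := fun _ : M => (1:R).
    have P1 : Pspace phi lambda n one.
      exists 1%N, (fun _ => 1); apply/funext => x.
      by rewrite big_mkcond big_ord1 /= hl0 mul1r hphi0.
    have c1 : continuous one by move=> x; exact: cvg_cst.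
    have int1 : (\int[mu]_x ((one x) ^+ 2)%:E)%E = 1%:E.
      rewrite (intE mu hM (fun x => one x ^+ 2)); last exact: cM.
      by rewrite /one expr1n int_cst.
    have [h1 h2] := hMZ _ P1.
    have sum1 : \sum_(k<L) `|one (y k)| ^+ 2 * tau k = \sum_(k<L) tau k.
      by apply: eq_bigr => k _; rewrite /one normr1 expr1n mul1r.
    move: h1 h2; rewrite int1 !mule1 !lee_fin => h1 h2.
    have AB : A <= B := le_trans h1 h2.
    have ST : \sum_(k<L) tau k <= B.
      by apply: le_trans h2; apply: ler_sum => k _; rewrite /one normr1 expr1n mul1r.
    have IB : \int[mu]_x (r x ^+ 2) <= s ^+ 2 * (B / A).
      rewrite -(ler_pM2l hA).
      have -> : A * (s ^+ 2 * (B / A)) = s ^+ 2 * B by field; rewrite gt_eqF.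
      apply: le_trans rint _; apply: le_trans VSG _; apply: le_trans SGle _.
      by apply: ler_wpM2l ; [exact: sqr_ge0 | exact: ST].
    apply: le_trans IB _; apply: ler_wpM2l; first exact: sqr_ge0.
    have BA1 : 1 <= B / A by rewrite ler_pdivlMr // mul1r.
    by rewrite expr2 ler_peMl // (le_trans _ BA1).
  have r0 : forall x, r x = 0.
    move: Pr => [N [c hr]] x; rewrite hr big1 // => k hk.
    by move: (le_lt_trans (le_trans (hlam_mono _ _ (leq0n k)) hk) hl0); rewrite ltxx.
  rewrite (@eq_Rintegral _ _ _ mu _ (fun _ => 0)); last by move=> x _; rewrite r0 expr0n.
  by rewrite int_cst; apply: mulr_ge0; exact: sqr_ge0.
apply: L2norm_le => //.
  by apply: mulr_ge0 => //; exact: sqrtr_ge0.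
rewrite exprMn sqr_sqrtr; last by apply: addr_ge0 => //; exact: sqr_ge0.
rewrite hint gr0 -/s mulr0 subr0 mulrDl mul1r [(B / A) ^+ 2 * _]mulrC; exact: lerD.
Qed.
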